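(* Let $n$ be a positive integer, let $\theta=\lambda/\mu$ be a skew Young diagram such that every column of $\theta$ contains at most $n$ boxes, and let $\beta$ be a nonzero complex number. Then $$G_\theta(\beta,\dots,\beta\mid -\beta^{-1})=\beta^{|\theta|},$$ where all $n$ variables are specialized to $\beta$.
   Context: Partitions are identified with Young diagrams $\{(i,j)\in\mathbb{Z}_{>0}^2 : j\le\lambda_i\}$ (row index $i$ increasing downward). For partitions $\mu\subseteq\lambda$, $\theta=\lambda/\mu=\lambda\setminus\mu$ and $|\theta|$ is its number of boxes. A set-valued tableau of shape $\theta$ with entries in $[n]=\{1,\dots,n\}$ assigns a non-empty subset $T_{i,j}\subseteq[n]$ to each box $(i,j)\in\theta$ such that $\max T_{i,j}\le\min T_{i,j+1}$ whenever $(i,j),(i,j+1)\in\theta$ and $\max T_{i,j}<\min T_{i+1,j}$ whenever $(i,j),(i+1,j)\in\theta$; $\mathrm{SVT}(\theta,n)$ is the set of these. For such $T$, $|T|=\sum_{(i,j)\in\theta}|T_{i,j}|$, $\omega_k(T)$ is the number of boxes whose set contains $k$, and $x^{\omega(T)}=\prod_{k=1}^n x_k^{\omega_k(T)}$. The skew Grothendieck polynomial is $G_\theta(x_1,\dots,x_n\mid\beta)=\sum_{T\in\mathrm{SVT}(\theta,n)}\beta^{|T|-|\theta|}x^{\omega(T)}$. *)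

(* Defs.v *)
From HB Require Import structures.
From mathcomp Require Import all_boot all_order all_algebra.
From mathcomp Require Import reals complex.
Set Implicit Arguments. Unset Strict Implicit. Unset Printing Implicit Defensive.
Import Order.TTheory GRing.Theory Num.Theory.
Local Open Scope ring_scope.

Definition is_partition (lam : seq nat) : bool :=
  sorted geq lam && all (fun k => 0 < k)%N lam.

Definition subpartition (mu lam : seq nat) : bool :=
  all (fun i => nth 0 mu i <= nth 0 lam i)%N (iota 0 (size mu)).

(* 0-indexed box (i,j) (i.e. the paper's (i+1,j+1)) lies in lam/mu *)
Definition inskew (lam mu : seq nat) (i j : nat) : bool :=
  (j < nth 0 lam i)%N && ~~ (j < nth 0 mu i)%N.

Definition box (lam : seq nat) : finType :=
  ('I_(size lam) * 'I_(\max_(k <- lam) k))%type.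

Definition inth (lam mu : seq nat) (b : box lam) : bool := inskew lam mu b.1 b.2.

Definition skew_size (lam mu : seq nat) : nat := #|[set b : box lam | inth mu b]|.

Definition col_count (lam mu : seq nat) (j : nat) : nat :=
  count (fun i => inskew lam mu i j) (iota 0 (size lam)).

(* Fillings: each box gets a subset of [n] (encoded as 'I_n, k <-> k+1). *)
Definition filling (n : nat) (lam : seq nat) : finType :=
  {ffun box lam -> {set 'I_n}}.

Definition smax n (A : {set 'I_n}) : nat := \max_(k in A) (k : nat).
Definition smin n (A : {set 'I_n}) : nat := \big[minn/n]_(k in A) (k : nat).

(* Set-valued tableau of shape lam/mu with entries in [n]: nonempty sets on
   boxes of theta (empty outside theta), weak increase along rows, strict
   increase down columns (max/min conditions). *)
Definition is_SVT n (lam mu : seq nat) (T : filling n lam) : bool :=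
  [forall b, (T b != set0) == inth mu b] &&
  [forall b, forall b',
     (inth mu b && inth mu b' && (b'.1 == b.1 :> nat) && (b'.2 == b.2.+1 :> nat))
       ==> (smax (T b) <= smin (T b'))%N] &&
  [forall b, forall b',
     (inth mu b && inth mu b' && (b'.1 == b.1.+1 :> nat) && (b'.2 == b.2 :> nat))
       ==> (smax (T b) < smin (T b'))%N].

Definition tsize n lam (T : filling n lam) : nat := \sum_(b : box lam) #|T b|.
Definition omega n lam (T : filling n lam) (k : 'I_n) : nat :=
  #|[set b : box lam | k \in T b]|.

(* Skew Grothendieck polynomial evaluated at x_1..x_n := x 0 .. x (n-1). *)
Definition Groth (F : comPzRingType) (n : nat) (lam mu : seq nat)
    (x : 'I_n -> F) (beta : F) : F :=
  \sum_(T : filling n lam | is_SVT mu T)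
     beta ^+ (tsize T - skew_size lam mu) * \prod_(k : 'I_n) x k ^+ omega T k.

(* Main.v *)
Require Import Defs.
From HB Require Import structures.
From mathcomp Require Import all_boot all_order all_algebra.
From mathcomp Require Import reals complex.
From mathcomp Require Import zify.
Import GRing.Theory Num.Theory.
Set Implicit Arguments. Unset Strict Implicit.

Lemma part_mono (s : seq nat) i i' : is_partition s -> (i <= i')%N ->
  (nth 0 s i' <= nth 0 s i)%N.
Proof.
move=> /andP[so _] le.
case: (ltnP i' (size s)) => hi'; last by rewrite nth_default.
have := @sorted_leq_nth _ geq _ _ 0 _ so i i'.
apply.
- by move=> a b c /= h1 h2; exact: leq_trans h2 h1.
- by move=> a /=.
- by rewrite inE (leq_ltn_trans le hi').
- by rewrite inE.
- done.
Qed.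

Definition depth (lam mu : seq nat) (i j : nat) : nat :=
  count (fun i' => (i < i')%N && inskew lam mu i' j) (iota 0 (size lam)).

Lemma inskew_size lam mu i j : inskew lam mu i j -> (i < size lam)%N.
Proof.
case/andP=> h _; case: (ltnP i (size lam)) => // hs.
by rewrite nth_default in h.
Qed.

Lemma inskew_max lam mu i j : inskew lam mu i j -> (j < \max_(k <- lam) k)%N.
Proof.
move=> H; have hs := inskew_size H; case/andP: H => h _.
apply: (leq_trans h); apply: (@leq_bigmax_seq _ lam xpredT id (nth 0 lam i)) => //.
exact: mem_nth.
Qed.

Lemma count_split T (p q : pred T) s :
  count p s = (count (fun x => p x && q x) s + count (fun x => p x && ~~ q x) s)%N.
Proof. by elim: s => //= x s ->; case: (p x); case: (q x) => /=; lia. Qed.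

Lemma depth_lt lam mu n i j : (forall j, (col_count lam mu j <= n)%N) ->
  inskew lam mu i j -> (depth lam mu i j < n)%N.
Proof.
move=> hc H; have := hc j; rewrite /col_count (count_split _ (fun i' => i < i')%N).
rewrite /depth.
have -> : count (fun x => inskew lam mu x j && (i < x)%N) (iota 0 (size lam)) =
          count (fun i' => (i < i')%N && inskew lam mu i' j) (iota 0 (size lam)).
  by apply: eq_count => x; rewrite andbC.
suff : (0 < count (fun x => inskew lam mu x j && ~~ (i < x)%N) (iota 0 (size lam)))%N by lia.
rewrite -has_count; apply/hasP; exists i; last by rewrite H ltnn.
by rewrite mem_iota /= add0n (inskew_size H).
Qed.

Lemma depth_right lam mu i j : is_partition mu -> inskew lam mu i j ->
  (depth lam mu i j.+1 <= depth lam mu i j)%N.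
Proof.
move=> pm H; apply: sub_count => i' /andP[lt /andP[h1 h2]].
rewrite lt /inskew (ltn_trans _ h1) //=.
case/andP: H => _; rewrite -!leqNgt => h3.
by rewrite (leq_trans (part_mono pm (ltnW lt))) // (leq_trans h3).
Qed.

Lemma depth_down0 lam mu i j : is_partition lam -> is_partition mu ->
  inskew lam mu i j -> ~~ inskew lam mu i.+1 j -> depth lam mu i j = 0%N.
Proof.
move=> pl pm H H1; apply/eqP; rewrite -leqn0 leqNgt -has_count; apply/hasP => -[i' _].
case/andP=> lt /andP[h1 h2]; move/negP: H1; apply.
rewrite /inskew (leq_trans h1) ?part_mono //=.
case/andP: H => _; rewrite -!leqNgt => h3.
by rewrite (leq_trans (part_mono pm (leqnSn i))).
Qed.

Lemma depth_down lam mu i j :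
  inskew lam mu i j -> inskew lam mu i.+1 j ->
  depth lam mu i j = (depth lam mu i.+1 j).+1.
Proof.
move=> H H1; rewrite /depth (count_split _ (fun x => x == i.+1)).
have -> : count (fun x => ((i < x)%N && inskew lam mu x j) && (x == i.+1)) (iota 0 (size lam)) = 1%N.
  transitivity (count_mem i.+1 (iota 0 (size lam))).
    apply: eq_count => x /=; case: eqP => [->|ne]; first by rewrite ltnSn H1.
    by rewrite andbF.
  by rewrite count_uniq_mem ?iota_uniq // mem_iota /= add0n (inskew_size H1).
rewrite add1n; congr _.+1; apply: eq_count => x.
case: eqP => [->|ne]; first by rewrite ltnn andbF.
rewrite andbT; congr (_ && _); apply/idP/idP => h; last exact: ltnW.
by rewrite ltn_neqAle h andbT; apply/eqP => e; apply: ne.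
Qed.

Lemma sminE n (S : {set 'I_n}) : smin S = \big[minn/n]_(y <- [seq val k | k <- enum S]) y.
Proof. by rewrite /smin big_map /enum_mem big_filter /index_enum [locked_with _ _]unlock. Qed.

Lemma bmin_le n (s : seq nat) x : x \in s -> (\big[minn/n]_(y <- s) y <= x)%N.
Proof.
elim: s => // y s IH; rewrite inE big_cons => /orP[/eqP->|h]; first exact: geq_minl.
by rewrite geq_min IH ?orbT.
Qed.

Lemma bmin_ge n (s : seq nat) a : (a <= n)%N -> (forall x, x \in s -> a <= x)%N ->
  (a <= \big[minn/n]_(y <- s) y)%N.
Proof.
move=> an; elim: s => [|y s IH] H; first by rewrite big_nil.
rewrite big_cons leq_min H ?mem_head //=; apply: IH => x xs; apply: H; by rewrite inE xs orbT.
Qed.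

Lemma bmin_mem n (s : seq nat) : s != [::] -> all (fun x => x < n)%N s ->
  \big[minn/n]_(y <- s) y \in s.
Proof.
elim: s => // y s IH _ /= /andP[yn al]; rewrite big_cons inE.
case: s IH al => [|z s] IH al.
  by rewrite big_nil /minn yn eqxx.
have := IH isT al; rewrite /minn; case: ifP => _; first by rewrite eqxx.
by move=> ->; rewrite orbT.
Qed.

Lemma smin_le n (S : {set 'I_n}) (k : 'I_n) : k \in S -> (smin S <= k)%N.
Proof. by move=> kS; rewrite sminE bmin_le //; apply: map_f; rewrite mem_enum. Qed.

Lemma smin_ge n (S : {set 'I_n}) a : (a <= n)%N -> (forall k : 'I_n, k \in S -> (a <= k)%N) ->
  (a <= smin S)%N.
Proof.
move=> an H; rewrite sminE bmin_ge // => x /mapP[k]; rewrite mem_enum => kS ->.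
exact: H.
Qed.

Lemma smin_mem n (S : {set 'I_n}) : S != set0 -> exists2 k : 'I_n, k \in S & smin S = k.
Proof.
move=> S0; have : smin S \in [seq val k | k <- enum S].
  rewrite sminE bmin_mem //.
    case/set0Pn: S0 => k kS; apply/eqP => e.
    have := map_f val (_ : k \in enum S); rewrite mem_enum e => /(_ kS).
    by rewrite in_nil.
  apply/allP => x /mapP[k _ ->]; exact: ltn_ord.
by case/mapP=> k; rewrite mem_enum => kS ->; exists k.
Qed.

Lemma smin_lt n (S : {set 'I_n}) : S != set0 -> (smin S < n)%N.
Proof. by case/smin_mem => k _ ->. Qed.

Lemma smin_eq n (S : {set 'I_n}) (a : 'I_n) :
  (smin S == a) = (a \in S) && [forall k in S, (a <= k)%N].
Proof.
apply/idP/idP.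
- move/eqP=> e.
  have S0 : S != set0.
    apply/eqP => S0; move: e; rewrite S0 /smin big_set0 => e.
    by have := ltn_ord a; rewrite -e ltnn.
  have [k kS ek] := smin_mem S0.
  have -> : a = k by apply: val_inj; rewrite /= -e ek.
  rewrite kS /=; apply/forall_inP => k' k'S; rewrite -ek smin_le //.
- case/andP=> aS /forall_inP H; rewrite eqn_leq smin_le // smin_ge //.
  exact: ltnW.
Qed.

Lemma smax_setU1 n (S : {set 'I_n}) (a : 'I_n) : a \notin S -> smax (a |: S) = maxn a (smax S).
Proof. by move=> aS; rewrite /smax big_setU1. Qed.

Lemma smax_le n (S : {set 'I_n}) (k : 'I_n) : k \in S -> (k <= smax S)%N.
Proof. by move=> kS; rewrite /smax (leq_bigmax_cond (F := fun k : 'I_n => (k : nat)) k kS). Qed.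

Lemma smax_set1 n (a : 'I_n) : smax [set a] = a.
Proof. by rewrite /smax big_set1. Qed.

Local Open Scope ring_scope.

Lemma smin_U1 n (S : {set 'I_n}) (a a1 : 'I_n) : a1 != a -> (a <= a1)%N ->
  (smin (a1 |: S) == a) = (smin S == a).
Proof.
move=> ne le; rewrite !smin_eq in_setU1 eq_sym (negbTE ne) /=.
apply/idP/idP => /andP[aS /forall_inP H]; rewrite aS; apply/forall_inP => k kS.
- by apply: H; rewrite in_setU1 kS orbT.
- by move: kS; rewrite in_setU1 => /orP[/eqP->|]; [|exact: H].
Qed.

Lemma single_box (F : pzRingType) n (a : 'I_n) (P : nat -> bool) :
  (forall x y, (x <= y)%N -> P y -> P x) ->
  \sum_(S : {set 'I_n} | [&& S != set0, smin S == a & P (smax S)]) ((-1) ^+ (#|S| - 1) : F)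
  = (P a && ~~ ((a.+1 < n)%N && P a.+1))%:R.
Proof.
move=> Pd.
have Qa : [&& [set a] != set0, smin [set a] == a & P (smax [set a])] = P a.
  have h1 : [set a] != set0 by apply/set0Pn; exists a; rewrite set11.
  have h2 : [forall k in [set a], (a <= k)%N].
    by apply/forall_inP => k; rewrite in_set1 => /eqP->.
  by rewrite smax_set1 smin_eq set11 h1 h2.
case: (ltnP a.+1 n) => ha; last first.
  rewrite /= andbT.
  have E : forall S : {set 'I_n}, [&& S != set0, smin S == a & P (smax S)] = (S == [set a]) && P a.
    move=> S; case: (S =P [set a]) => [->|ne]; first by rewrite Qa.
    apply/negbTE/negP => /and3P[_].
    rewrite smin_eq => /andP[aS /forall_inP H] _.
    apply: ne; apply/setP => k; rewrite in_set1; apply/idP/eqP => [kS|->] //.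
    apply: val_inj => /=; have := H k kS; have := ltn_ord k; lia.
  rewrite (eq_bigl _ _ E); case Pa: (P a).
    by rewrite (eq_bigl _ _ (fun S => andbT (S == [set a]))) big_pred1_eq cards1.
  by rewrite big_pred0 // => S; rewrite andbF.
rewrite andTb.
pose a1 : 'I_n := Ordinal ha.
have a1a : a1 != a by rewrite -val_eqE /= neq_ltn ltnSn orbT.
pose tog := fun S : {set 'I_n} => if a1 \in S then S :\ a1 else a1 |: S.
have togK : involutive tog.
  move=> S; rewrite /tog; case h: (a1 \in S).
    by rewrite in_setD1 eqxx /= setD1K.
  by rewrite setU11 setU1K ?h.
rewrite (bigID (fun S : {set 'I_n} => a1 \in S)) /=.
rewrite (reindex_inj (inv_inj togK)) /=.
have E1 : forall S : {set 'I_n}, a1 \notin S -> tog S = a1 |: S by move=> S h; rewrite /tog (negbTE h).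
rewrite (eq_bigl (fun S : {set 'I_n} => [&& a1 |: S != set0, smin (a1 |: S) == a & P (smax (a1 |: S))] && (a1 \notin S))); last first.
  move=> S; rewrite /tog; case h: (a1 \in S) => /=.
    by rewrite in_setD1 eqxx !andbF.
  by rewrite setU11 !andbT.
rewrite (eq_bigr (fun S : {set 'I_n} => (-1) ^+ (#|a1 |: S| - 1))); last by move=> S /andP[_ h]; rewrite E1.
rewrite !big_mkcondl -big_split /=.
have a1na : a1 \notin [set a] by rewrite in_set1.
have ne1 : forall S : {set 'I_n}, a1 |: S != set0.
  by move=> S; apply/set0Pn; exists a1; rewrite setU11.
have le1 : (a <= a1)%N by rewrite /= leqnSn.
rewrite (bigD1 [set a]) //= big1 ?addr0.
  rewrite Qa ne1 smin_U1 // smax_setU1 // smax_set1 cardsU1 a1na cards1 /=.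
  have -> : smin [set a] == a by rewrite smin_eq set11; apply/forall_inP => k; rewrite in_set1 => /eqP->.
  have -> : maxn a.+1 a = a.+1 by apply/maxn_idPl; exact: leqnSn.
  case Pa1: (P a.+1); first by rewrite (Pd a a.+1) // expr1 addNr.
  by case: (P a); rewrite /= ?add0r ?subnn ?expr0.
move=> S /andP[a1S neS].
rewrite ne1 smin_U1 // smax_setU1 // cardsU1 a1S.
case e: (smin S == a); last by rewrite !andFb !andbF addr0.
move: (e); rewrite smin_eq => /andP[aS /forall_inP H].
have S0 : S != set0 by apply/set0Pn; exists a.
have : ~~ (S \subset [set a]).
  by apply: contra neS => sub; rewrite eqEsubset sub sub1set aS.
case/subsetPn => k kS.
rewrite in_set1 => ka.
have gt : (a1 < smax S)%N.
  have := H k kS; have := smax_le kS; have : k != a1 by apply: contraNneq a1S => <-.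
  rewrite -!val_eqE /= in ka * => k1 h1 h2; lia.
rewrite (maxn_idPr (ltnW gt)) S0 /=.
case: (P (smax S)); last by rewrite addr0.
have : (0 < #|S|)%N by rewrite card_gt0.
case: #|S| => // c _ /=; rewrite add1n subn1 /= subn1 /= exprS mulN1r addNr //.
Qed.

Definition Pb (lam mu : seq nat) n (m : {ffun box lam -> 'I_n}) (b : box lam) (M : nat) : bool :=
  [forall b', (inth mu b' && (b'.1 == b.1 :> nat) && (b'.2 == b.2.+1 :> nat)) ==> (M <= m b')%N] &&
  [forall b', (inth mu b' && (b'.1 == b.1.+1 :> nat) && (b'.2 == b.2 :> nat)) ==> (M < m b')%N].

Definition Qp (lam mu : seq nat) n (x0 : 'I_n) (m : {ffun box lam -> 'I_n}) (b : box lam) :=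
  [pred S : {set 'I_n} | if inth mu b then [&& S != set0, smin S == m b & Pb mu m b (smax S)]
                         else (S == set0) && (m b == x0)].

Definition minsf (lam mu : seq nat) n (x0 : 'I_n) (T : filling n lam) : {ffun box lam -> 'I_n} :=
  [ffun b => if inth mu b then insubd x0 (smin (T b)) else x0].

Lemma famQ (lam mu : seq nat) n (x0 : 'I_n) (m : {ffun box lam -> 'I_n}) (T : filling n lam) :
  (T \in family (Qp mu x0 m)) = is_SVT mu T && (m == minsf mu x0 T).
Proof.
have vm : forall b, inth mu b -> T b != set0 -> (smin (T b) == m b) = (m b == insubd x0 (smin (T b))).
  move=> b _ ne; rewrite -val_eqE val_insubd smin_lt //; exact: eq_sym.
apply/familyP/andP => [H|[/andP[/andP[/forallP H1 /forallP H2] /forallP H3] /eqP em]].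
  have Hb : forall b, inth mu b -> [&& T b != set0, smin (T b) == m b & Pb mu m b (smax (T b))].
    by move=> b ib; have := H b; rewrite inE ib.
  have Hn : forall b, ~~ inth mu b -> (T b == set0) && (m b == x0).
    by move=> b ib; have := H b; rewrite inE (negbTE ib).
  split.
    apply/andP; split; first (apply/andP; split).
    - apply/forallP => b; case ib: (inth mu b).
        by case/and3P: (Hb b ib) => X _ _; rewrite X.
      by case/andP: (Hn b (negbT ib)) => /eqP -> _; rewrite eqxx.
    - apply/forallP => b; apply/forallP => b'; apply/implyP => /andP[/andP[/andP[ib ib'] e1] e2].
      case/and3P: (Hb b ib) => _ _ /andP[/forallP R _].
      case/and3P: (Hb b' ib') => _ /eqP -> _.
      by have := R b'; rewrite ib' e1 e2.
    - apply/forallP => b; apply/forallP => b'; apply/implyP => /andP[/andP[/andP[ib ib'] e1] e2].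
      case/and3P: (Hb b ib) => _ _ /andP[_ /forallP R].
      case/and3P: (Hb b' ib') => _ /eqP -> _.
      by have := R b'; rewrite ib' e1 e2.
  apply/eqP/ffunP => b; rewrite ffunE; case ib: (inth mu b).
    by case/and3P: (Hb b ib) => ne e _; apply/eqP; rewrite -vm.
  by case/andP: (Hn b (negbT ib)) => _ /eqP.
move=> b; rewrite inE; case ib: (inth mu b); last first.
  by have := H1 b; rewrite ib em ffunE ib => /eqP/negbFE ->; rewrite eqxx.
have ne : T b != set0 by have := H1 b; rewrite ib => /eqP.
have e0 : smin (T b) == m b.
  by rewrite em ffunE ib val_insubd smin_lt.
rewrite ne e0 /=; apply/andP; split; apply/forallP => b';
  apply/implyP => /andP[/andP[ib' e1] e2]; rewrite em ffunE ib';
  have ne' : T b' != set0 by have := H1 b'; rewrite ib' => /eqP.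
- rewrite val_insubd smin_lt //.
  by have := H2 b; move/forallP/(_ b'); rewrite ib ib' e1 e2.
- rewrite val_insubd smin_lt //.
  by have := H3 b; move/forallP/(_ b'); rewrite ib ib' e1 e2.
Qed.

Definition cond (lam mu : seq nat) n (x0 : 'I_n) (m : {ffun box lam -> 'I_n}) (b : box lam) : bool :=
  if inth mu b then Pb mu m b (m b) && ~~ (((m b).+1 < n)%N && Pb mu m b (m b).+1)
  else m b == x0.

Lemma prod_bool (F : comPzRingType) (I : finType) (P : pred I) :
  \prod_i ((P i)%:R : F) = ([forall i, P i])%:R.
Proof.
case: forallP => [H|/forallP H].
  by rewrite big1 // => i _; rewrite H.
move: H; rewrite negb_forall => /existsP[i Pi].
by rewrite (bigD1 i) //= (negbTE Pi) mul0r.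
Qed.

Lemma sum_SVT_eq (F : comPzRingType) (lam mu : seq nat) n (x0 : 'I_n) :
  \sum_(T : filling n lam | is_SVT mu T) \prod_b ((-1) ^+ (#|T b| - inth mu b) : F)
  = \sum_(m : {ffun box lam -> 'I_n}) ([forall b, cond mu x0 m b])%:R.
Proof.
transitivity (\sum_(m : {ffun box lam -> 'I_n})
   \sum_(T in family (Qp mu x0 m)) \prod_b ((-1) ^+ (#|T b| - inth mu b) : F)).
  rewrite (exchange_big_dep xpredT) //= [LHS]big_mkcond; apply: eq_bigr => T _.
  rewrite (eq_bigl (fun m => is_SVT mu T && (m == minsf mu x0 T))); last by move=> m; rewrite famQ.
  case: (is_SVT mu T); first by rewrite big_pred1_eq.
  by rewrite big_pred0.
apply: eq_bigr => m _.
transitivity (\prod_b \sum_(S | S \in Qp mu x0 m b) ((-1) ^+ (#|S| - inth mu b) : F)).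
  by rewrite bigA_distr_big_dep.
rewrite -prod_bool; apply: eq_bigr => b _.
rewrite /cond; case ib: (inth mu b).
  rewrite (eq_bigl (fun S => [&& S != set0, smin S == m b & Pb mu m b (smax S)])); last first.
    by move=> S; rewrite inE ib.
  rewrite single_box // => x y le /andP[/forallP H1 /forallP H2]; apply/andP; split;
    apply/forallP => b'; apply/implyP => h.
  - by move/implyP: (H1 b') => /(_ h) /(leq_trans le).
  - by move/implyP: (H2 b') => /(_ h) /(leq_ltn_trans le).
case e: (m b == x0).
  rewrite (eq_bigl (fun S => S == set0)); last by move=> S; rewrite inE ib e andbT.
  by rewrite big_pred1_eq cards0.
by rewrite big_pred0 // => S; rewrite inE ib e andbF.
Qed.

Local Close Scope ring_scope.

Definition cf (lam mu : seq nat) n (x0 : 'I_n) : {ffun box lam -> 'I_n} :=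
  [ffun b : box lam => if inth mu b then insubd x0 (n.-1 - depth lam mu b.1 b.2) else x0].
Arguments cf {lam} mu {n} x0.

Lemma exbox (lam mu : seq nat) i j : inskew lam mu i j ->
  exists b : box lam, [/\ (b.1 : nat) = i, (b.2 : nat) = j & inth mu b].
Proof.
move=> H; exists (Ordinal (inskew_size H), Ordinal (inskew_max H)); split => //.
Qed.

Lemma cfE (lam mu : seq nat) n (x0 : 'I_n) (b : box lam) : (0 < n)%N -> inth mu b ->
  (cf mu x0 b : nat) = (n.-1 - depth lam mu b.1 b.2)%N.
Proof. by move=> n0 ib; rewrite ffunE ib val_insubd; case: ifP => //; lia. Qed.

Lemma cf_cond (lam mu : seq nat) n (x0 : 'I_n) : (0 < n)%N ->
  is_partition lam -> is_partition mu ->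
  (forall j, (col_count lam mu j <= n)%N) ->
  forall b : box lam, cond mu x0 (cf mu x0) b.
Proof.
move=> n0 pl pm hc b; rewrite /cond; case ib: (inth mu b); last by rewrite ffunE ib.
have Dn := depth_lt hc ib.
have Pcf : Pb mu (cf mu x0) b (cf mu x0 b).
  apply/andP; split; apply/forallP => b'; apply/implyP => /andP[/andP[ib' /eqP e1] /eqP e2].
  - rewrite !cfE // e1 e2; have := depth_right pm ib; lia.
  - rewrite !cfE // e1 e2; rewrite /inth e1 e2 in ib'.
    have := depth_down ib ib'; lia.
rewrite Pcf /=; apply/negP => /andP[lt /andP[_ /forallP H]].
case ib1: (inskew lam mu b.1.+1 b.2).
  case: (exbox ib1) => d [d1 d2 id]; have := H d; rewrite id d1 d2 !eqxx /=.
  rewrite !cfE //; have := depth_down ib ib1; rewrite -d1 -d2; lia.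
move: lt; rewrite cfE // (depth_down0 pl pm ib (negbT ib1)); lia.
Qed.

Lemma cond_cf (lam mu : seq nat) n (x0 : 'I_n) (m : {ffun box lam -> 'I_n}) : (0 < n)%N ->
  is_partition lam -> is_partition mu ->
  (forall j, (col_count lam mu j <= n)%N) ->
  (forall b, cond mu x0 m b) -> m = cf mu x0.
Proof.
move=> n0 pl pm hc H.
set M := (\max_(k <- lam) k)%N.
have main : forall k (b : box lam), ((size lam - b.1) + (M - b.2) <= k)%N -> inth mu b ->
    (m b : nat) = (n.-1 - depth lam mu b.1 b.2)%N.
  elim=> [|k IH] b hk ib.
    have := ltn_ord b.1; lia.
  have Dn := depth_lt hc ib.
  have := H b; rewrite /cond ib => /andP[/andP[/forallP Hr /forallP Hd]].
  have mn := ltn_ord (m b).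
  have up : (m b <= n.-1 - depth lam mu b.1 b.2)%N.
    case ib1: (inskew lam mu b.1.+1 b.2).
      case: (exbox ib1) => d [d1 d2 id].
      have := Hd d; rewrite id d1 d2 !eqxx /= => lt.
      have hd : ((size lam - d.1) + (M - d.2) <= k)%N.
        have := inskew_size ib1; rewrite d1 d2; lia.
      move: lt; rewrite (IH d hd id) (depth_down ib ib1) d1 d2; lia.
    rewrite (depth_down0 pl pm ib (negbT ib1)); lia.
  rewrite negb_and => /orP[|]; first by lia.
  rewrite negb_and => /orP[/forallPn[b' /negPf]|/forallPn[b' /negPf]];
    case: (_ && _ && _) / andP => [[/andP[ib' /eqP e1] /eqP e2]|] //= /negbT; rewrite -ltnNge => lt.
  - have hb' : ((size lam - b'.1) + (M - b'.2) <= k)%N by have := ltn_ord b'.2; lia.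
    move: lt; rewrite (IH b' hb' ib') e1 e2; have := depth_right pm ib; move: up; set D1 := depth lam mu b.1 b.2; set D2 := depth lam mu b.1 b.2.+1; set N := n.-1; set X := nat_of_ord (m b). clearbody D1 D2 N X. move=> h1 h2 h3. lia.
  - have hb' : ((size lam - b'.1) + (M - b'.2) <= k)%N by have := ltn_ord b'.1; lia.
    have ib1 : inskew lam mu b.1.+1 b.2 by rewrite /inth e1 e2 in ib'.
    move: lt up; rewrite (IH b' hb' ib') e1 e2 (depth_down ib ib1); move=> h1 h2. move: h1 h2; set N := n.-1; set X := nat_of_ord (m b); clearbody N X; lia.
apply/ffunP => b; case ib: (inth mu b).
  by apply: ord_inj; rewrite cfE // (main _ b (leqnn _) ib).
by have := H b; rewrite /cond ib ffunE ib => /eqP.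
Qed.

Unset Implicit Arguments.
Local Open Scope ring_scope.

Lemma omega_sum n lam (T : filling n lam) : (\sum_(k : 'I_n) omega T k)%N = Defs.tsize T.
Proof.
rewrite /omega /Defs.tsize.
transitivity (\sum_(k : 'I_n) \sum_(b : box lam) (k \in T b : nat))%N.
  apply: eq_bigr => k _; rewrite -sum1_card big_mkcond /=; apply: eq_bigr => b _.
  by rewrite inE; case: (k \in T b).
rewrite exchange_big /=; apply: eq_bigr => b _.
rewrite -sum1_card [RHS]big_mkcond /=; apply: eq_bigr => i _; by case: (i \in T b).
Qed.

Lemma skew_sizeE lam mu : skew_size lam mu = (\sum_(b : box lam) (inth mu b : nat))%N.
Proof.
rewrite /skew_size -sum1_card big_mkcond /=; apply: eq_bigr => b _.
by rewrite inE; case: (inth mu b).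
Qed.

Theorem theoremB1 (R : realType) (n : nat) (lam mu : seq nat) (beta : R[i]) :
  (0 < n)%N ->
  is_partition lam -> is_partition mu -> subpartition mu lam ->
  (forall j : nat, (col_count lam mu j <= n)%N) ->
  beta != 0 ->
  @Groth _ n lam mu (fun _ => beta) (- beta^-1) = beta ^+ skew_size lam mu.
Proof.
move=> n0 pl pm _ hc b0.
pose x0 : 'I_n := Ordinal n0.
rewrite /Groth.
have key : forall T : filling n lam, is_SVT mu T ->
    (- beta^-1) ^+ (Defs.tsize T - skew_size lam mu) * \prod_(k : 'I_n) beta ^+ omega T k =
    beta ^+ skew_size lam mu * \prod_b ((-1) ^+ (#|T b| - inth mu b)).
  move=> T /andP[/andP[/forallP H1 _] _].
  have ge : forall b, (inth mu b <= #|T b|)%N.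
    move=> b; have := H1 b; case: (inth mu b) => // /eqP.
    by rewrite card_gt0.
  have ts : Defs.tsize T = (skew_size lam mu + \sum_b (#|T b| - inth mu b))%N.
    rewrite skew_sizeE /Defs.tsize -big_split /=; apply: eq_bigr => b _.
    by rewrite subnKC.
  rewrite -(big_morph (fun k => beta ^+ k) (exprD beta) (expr0 beta)) omega_sum.
  rewrite -(big_morph (fun k => (-1 : R[i]) ^+ k) (exprD (-1)) (expr0 (-1))).
  by rewrite ts addKn exprD mulrCA -exprMn mulNr mulVf.
rewrite (eq_bigr _ key) -mulr_sumr.
rewrite (sum_SVT_eq _ _ _ x0).
rewrite (eq_bigr (fun m => (m == cf mu x0)%:R)); last first.
  move=> m _; have -> // : [forall b, cond mu x0 m b] = (m == cf mu x0).
  apply/idP/eqP => [/forallP H|->].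
    exact: cond_cf.
  by apply/forallP; apply: cf_cond.
by rewrite (bigD1 (cf mu x0)) //= eqxx big1 ?addr0 ?mulr1 // => m /negbTE ->.
Qed.
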